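(* $\mathcal{S}pl\leq_{K}\mathrm{tr}(\mathcal{E})$ and $\mathcal{S}pl\leq_{K}\mathcal{F}in\times\mathcal{F}in$.
   Context: For an infinite $A\subseteq\omega$, let $S(A)$ be the set of all $\sigma\in2^{<\omega}$ such that $\sigma$ is constant on $A\cap\mathrm{dom}(\sigma)$. The splitting ideal $\mathcal{S}pl$ is the ideal on $2^{<\omega}$ generated by the sets $S(A)$, $A\in[\omega]^{\omega}$. $\mathcal{E}$ is the $\sigma$-ideal on $2^\omega$ generated by closed sets of Lebesgue measure zero. $\mathrm{tr}(\mathcal{E})$ is the ideal on $2^{<\omega}$ consisting of those $A\subseteq2^{<\omega}$ such that $\{x\in2^{\omega}:x|_{n}\in A$ for infinitely many $n\}\in\mathcal{E}$. $\mathcal{F}in\times\mathcal{F}in$ is the ideal on $\omega\times\omega$ of sets $A$ such that for all but finitely many $n$ the set $\{m:(n,m)\in A\}$ is finite. For ideals $\mathcal{J}_0,\mathcal{J}_1$ on countable sets $X_0,X_1$, $\mathcal{J}_{0}\leq_{K}\mathcal{J}_{1}$ (Katětov reducibility) means there is a function $\pi:X_1\rightarrow X_0$ with $\pi^{-1}[A]\in\mathcal{J}_{1}$ for every $A\in\mathcal{J}_{0}$. *)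

(* Defs.v *)
From mathcomp Require Import all_boot all_algebra.
Set Implicit Arguments. Unset Strict Implicit. Unset Printing Implicit Defensive.
Import GRing.Theory Num.Theory.

Definition str := seq bool.
Definition cantor := nat -> bool.

Definition infinite_nat (A : nat -> Prop) : Prop :=
  forall n, exists m, (n <= m)%N /\ A m.

Definition S_of (A : nat -> Prop) (s : str) : Prop :=
  forall i j, A i -> A j -> (i < size s)%N -> (j < size s)%N ->
    nth false s i = nth false s j.

(* The splitting ideal: the ideal generated by the S(A), A infinite, i.e.
   subsets of finite unions of such sets. *)
Definition Spl (X : str -> Prop) : Prop :=
  exists (k : nat) (As : nat -> (nat -> Prop)),
    (forall i, (i < k)%N -> infinite_nat (As i)) /\
    (forall s, X s -> exists i, (i < k)%N /\ S_of (As i) s).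

Definition prefix (x : cantor) (n : nat) : str := mkseq x n.

Definition cylinder (s : str) (x : cantor) : Prop := prefix x (size s) = s.

(* closed in the product topology of 2^omega *)
Definition closed_cantor (C : cantor -> Prop) : Prop :=
  forall x, (forall n, exists y, C y /\ prefix y n = prefix x n) -> C x.

(* Lebesgue (fair-coin product) measure zero, via covers by cylinders:
   for every k, a countable family of cylinders covers N with total
   measure <= 2^-k. *)
Definition null_cantor (N : cantor -> Prop) : Prop :=
  forall k : nat, exists s : nat -> str,
    (forall x, N x -> exists i, cylinder (s i) x) /\
    (forall m, (\sum_(i < m) ((2%:R : rat) ^- size (s i)) <= (2%:R : rat) ^- k)%R).

(* E: sigma-ideal generated by closed null sets *)
Definition E_ideal (N : cantor -> Prop) : Prop :=
  exists Cs : nat -> (cantor -> Prop),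
    (forall n, closed_cantor (Cs n) /\ null_cantor (Cs n)) /\
    (forall x, N x -> exists n, Cs n x).

Definition trE (X : str -> Prop) : Prop :=
  E_ideal (fun x => forall n, exists m, (n <= m)%N /\ X (prefix x m)).

Definition FinFin (A : nat * nat -> Prop) : Prop :=
  exists N, forall n, (N <= n)%N -> exists M, forall m, A (n, m) -> (m < M)%N.

Definition katetov_le (X0 X1 : Type) (J0 : (X0 -> Prop) -> Prop)
  (J1 : (X1 -> Prop) -> Prop) : Prop :=
  exists pi : X1 -> X0, forall A, J0 A -> J1 (fun x => A (pi x)).

(* Main.v *)
Require Import Defs.
From mathcomp Require Import all_boot all_order all_algebra.
From mathcomp Require Import zify ring lra.
From Stdlib Require Import Classical.
Import GRing.Theory Num.Theory Order.TTheory.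
Definition pi2 (nm : nat * nat) : str := nseq nm.1 false ++ nseq nm.2 true.

Lemma pi2_single (A : nat -> Prop) : infinite_nat A ->
  exists N, forall n, (N <= n)%N -> exists M, forall m, S_of A (pi2 (n, m)) -> (m < M)%N.
Proof.
move=> hA; have [a0 [_ Ha0]] := hA 0.
exists a0.+1 => n hn; have [a1 [h1 Ha1]] := hA n.
exists a1.+1 => m hS; rewrite ltnNge; apply/negP => hm.
have sz : size (pi2 (n, m)) = n + m by rewrite /pi2 size_cat !size_nseq.
have := hS a0 a1 Ha0 Ha1.
rewrite sz /pi2 /= !nth_cat !size_nseq !nth_nseq hn (ltnNge a1 n) h1 /=.
have -> : a1 - n < m by apply: leq_ltn_trans (leq_subr _ _) hm.
move=> H; have : false = true by apply: H => //; lia.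
by [].
Qed.

Lemma pi2_k k (As : nat -> nat -> Prop) : (forall i, (i < k)%N -> infinite_nat (As i)) ->
  exists N, forall n, (N <= n)%N -> exists M, forall m i, (i < k)%N -> S_of (As i) (pi2 (n, m)) -> (m < M)%N.
Proof.
elim: k => [|k IH] hk.
  by exists 0 => n _; exists 0 => m i.
have [N1 H1] := IH (fun i hi => hk i (leqW hi)).
have [N2 H2] := @pi2_single _ (hk k (ltnSn k)).
exists (maxn N1 N2) => n hn.
have [M1 HM1] := H1 n (leq_trans (leq_maxl _ _) hn).
have [M2 HM2] := H2 n (leq_trans (leq_maxr _ _) hn).
exists (maxn M1 M2) => m i hi hS.
rewrite ltnS leq_eqVlt in hi; case/orP: hi => [/eqP ei|hi].
  subst i; exact: leq_trans (HM2 m hS) (leq_maxr _ _).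
exact: leq_trans (HM1 m i hi hS) (leq_maxl _ _).
Qed.

Lemma part2 : katetov_le Spl FinFin.
Proof.
exists pi2 => X [k [As [hinf hcov]]].
have [N HN] := @pi2_k k As hinf.
exists N => n hn; have [M HM] := HN n hn.
exists M => m hX; have [i [hi hS]] := hcov _ hX.
exact: HM m i hi hS.
Qed.
Fixpoint W (p : pred nat) (b : bool) (L : nat) : seq str :=
  match L with
  | 0 => [:: [::]]
  | L'.+1 => if p L' then [seq rcons s b | s <- W p b L']
             else [seq rcons s false | s <- W p b L'] ++ [seq rcons s true | s <- W p b L']
  end.

Lemma W_size p b L s : s \in W p b L -> size s = L.
Proof.
elim: L s => [|L IH] s /=; first by rewrite inE => /eqP ->.
case: (p L); last rewrite mem_cat; [|case/orP];
  by move=> /mapP [t ht ->]; rewrite size_rcons (IH t ht).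
Qed.

Lemma W_card p b L : (size (W p b L) * 2 ^ count p (iota 0 L) = 2 ^ L)%N.
Proof.
elim: L => [|L IH] //.
have -> : iota 0 L.+1 = iota 0 L ++ [:: L] by rewrite -addn1 iotaD.
rewrite count_cat /= addn0 expnD [in RHS]expnS.
case: (p L) => /=.
  by rewrite size_map expn1 mulnA IH mulnC.
by rewrite size_cat !size_map expn0 muln1 addnn -mul2n -mulnA IH.
Qed.

Lemma W_cover (p : pred nat) (b : bool) (L : nat) (x : cantor) : (forall i, (i < L)%N -> p i -> x i = b) -> Defs.prefix x L \in W p b L.
Proof.
elim: L => [|L IH] H /=; first by rewrite /Defs.prefix /= inE.
rewrite /Defs.prefix mkseqS.
have IH' : Defs.prefix x L \in W p b L by apply: IH => i hi; apply: H; apply: ltnW.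
case hp: (p L).
  by rewrite (H L (ltnSn L) hp); apply: map_f.
rewrite mem_cat; case: (x L); apply/orP; [right|left]; exact: map_f.
Qed.

Lemma count_ps (ps : seq nat) L : uniq ps -> (forall i, i \in ps -> (i < L)%N) ->
  count (mem ps) (iota 0 L) = size ps.
Proof.
move=> u h; rewrite -size_filter; apply: perm_size.
apply: uniq_perm => //; first by rewrite filter_uniq // iota_uniq.
move=> i; rewrite mem_filter mem_iota /= add0n.
by apply/andP/idP => [[]//|hi]; split => //; apply: h.
Qed.

Lemma ps_exists (A : nat -> Prop) c : infinite_nat A -> exists ps L,
  uniq ps /\ size ps = c /\ forall i, i \in ps -> A i /\ (i < L)%N.
Proof.
move=> hA; elim: c => [|c [ps [L [u [s h]]]]]; first by exists [::], 0.
have [m [hm Am]] := hA L.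
exists (m :: ps), m.+1; split; [|split] => /=.
- rewrite u andbT; apply/negP => /h [_ hl]; lia.
- by rewrite s.
- move=> i; rewrite inE => /orP [/eqP ->|/h [Ai hi]]; split => //.
  lia.
Qed.

Local Open Scope ring_scope.
Definition two : rat := 2%:R.

Lemma geom a m : (\sum_(i < m) two ^- (a + i.+1) + two ^- (a + m) = two ^- a)%R.
Proof.
elim: m => [|m IH]; first by rewrite big_ord0 add0r addn0.
rewrite big_ord_recr /= -IH -addrA; congr (_ + _)%R.
have h2 : two ^- (a + m) = two ^- (a + m).+1 + two ^- (a + m).+1.
  rewrite exprS invfM /two. 
  have : (2%:R : rat) ^+ (a + m) != 0 by rewrite expf_neq0 // pnatr_eq0.
  move=> nz; field; by rewrite ?nz ?pnatr_eq0.
by rewrite h2 addnS.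
Qed.

Lemma head_sum (S : nat) (w : rat) m : (0 <= w)%R ->
  (\sum_(i < m) (if (i < S)%N then w else 0) <= S%:R * w)%R.
Proof.
move=> w0; elim: m => [|m IH]; first by rewrite big_ord0 mulr_ge0 ?ler0n.
rewrite big_ord_recr /=.
case: (ltnP m S) => hm.
  have : (\sum_(i < m) (if (i < S)%N then w else 0) = m%:R * w)%R.
    rewrite (eq_bigr (fun _ => w)); first by rewrite sumr_const card_ord mulr_natl.
    by move=> i _; rewrite (ltn_trans (ltn_ord i) hm).
  move=> ->; rewrite -[X in (_ + X <= _)%R]mul1r -mulrDl natr1 ler_wpM2r // ler_nat.
  done.
by rewrite addr0.
Qed.

Definition CA (A : nat -> Prop) (x : cantor) : Prop := forall i j, A i -> A j -> x i = x j.

Lemma prefix_nth (x : cantor) m i : (i < m)%N -> nth false (Defs.prefix x m) i = x i.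
Proof. by move=> h; rewrite /Defs.prefix nth_mkseq. Qed.

Lemma closed_CA A : closed_cantor (CA A).
Proof.
move=> x H i j Ai Aj.
have [y [Cy E]] := H (maxn i j).+1.
have ei : x i = y i.
  by rewrite -(prefix_nth x _ _ (_ : (i < (maxn i j).+1)%N)) -?E ?prefix_nth // ltnS leq_maxl.
have ej : x j = y j.
  by rewrite -(prefix_nth x _ _ (_ : (j < (maxn i j).+1)%N)) -?E ?prefix_nth // ltnS leq_maxr.
by rewrite ei ej (Cy i j).
Qed.

Lemma two_pos n : 0 < two ^+ n.
Proof. by rewrite exprn_gt0 // /two ltr0n. Qed.

Lemma null_CA A : infinite_nat A -> null_cantor (CA A).
Proof.
move=> hA k.
have [ps [L [u [sz h]]]] := ps_exists A k.+2 hA.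
pose p : pred nat := fun i => i \in ps.
pose Ws := W p false L ++ W p true L.
pose S := size Ws.
exists (fun i => if (i < S)%N then nth [::] Ws i else nseq (k.+1 + i.+1) false); split.
  move=> x Cx.
  have [a [ps' eps]] : exists a ps', ps = a :: ps'.
    by move: sz; case: (ps) => // a ps' _; exists a, ps'.
  have hb : forall i, (i < L)%N -> p i -> x i = x a.
    move=> i _ hi; apply: Cx; first by case: (h i hi).
    by case: (h a); rewrite ?eps ?mem_head.
  have hin : Defs.prefix x L \in Ws.
    rewrite mem_cat; apply/orP; case hxa: (x a); [right|left];
      by apply: W_cover => i hi hp; rewrite (hb i hi hp) hxa.
  exists (index (Defs.prefix x L) Ws).
  by rewrite index_mem hin nth_index // /cylinder /Defs.prefix size_mkseq.
move=> m.
have card : (S * 2 ^ k.+2 = 2 * 2 ^ L)%N.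
  rewrite /S size_cat mulnDl.
  have hc : count p (iota 0 L) = k.+2.
    by rewrite -sz; apply: count_ps => // i /h [].
  by rewrite -hc !W_card mul2n addnn.
have cardR : S%:R * two ^+ k.+2 = 2 * two ^+ L.
  by rewrite /two -!natrX -natrM card natrM natrX.
apply: le_trans (_ : \sum_(i < m) ((if (i < S)%N then two ^- L else 0) + two ^- (k.+1 + i.+1)) <= _).
  apply: ler_sum => i _; case: ifP => hi.
    have := mem_nth [::] hi; rewrite mem_cat => /orP [] /W_size ->; by rewrite lerDl invr_ge0 ltW ?two_pos.
  by rewrite size_nseq add0r.
rewrite big_split /=.
have hpos : 0 < two ^- L by rewrite invr_gt0 two_pos.
have h1 := head_sum S (two ^- L) m (ltW hpos).
have h2 := geom k.+1 m.
have h4 : two ^- k.+1 + two ^- k.+1 = two ^- k.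
  by have := geom k 1; rewrite big_ord1 addn1.
have h5 : 0 <= two ^- (k.+1 + m) by rewrite invr_ge0 ltW ?two_pos.
have h3 : S%:R * two ^- L = two ^- k.+1.
  have tnz : two != 0 by rewrite /two pnatr_eq0.
  have anz : two ^+ L != 0 by rewrite expf_neq0.
  have bnz : two ^+ k.+1 != 0 by rewrite expf_neq0.
  have cnz : two * two ^+ k.+1 != 0 by rewrite mulf_neq0.
  rewrite exprS in cardR.
  rewrite -[S%:R](mulfK cnz) cardR; field.
  by rewrite anz bnz.
have e1 : \sum_(i < m) two ^- (k.+1 + i.+1) = two ^- k.+1 - two ^- (k.+1 + m).
  by rewrite -h2 addrK.
rewrite e1; rewrite h3 in h1; lra.
Qed.

Lemma pigeon (P : nat -> nat -> Prop) k :
  (forall n, exists m, (n <= m)%N /\ exists i, (i < k)%N /\ P i m) ->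
  exists i, (i < k)%N /\ forall n, exists m, (n <= m)%N /\ P i m.
Proof.
elim: k => [|k IH] H.
  by have [m [_ [i [hi _]]]] := H 0.
destruct (classic (forall n, exists m, (n <= m)%N /\ P k m)) as [Hk|Hk].
  by exists k; split.
have [n0 Hn0] : exists n0, forall m, (n0 <= m)%N -> ~ P k m.
  apply: NNPP => N; apply: Hk => n; apply: NNPP => N2; apply: N; exists n.
  by move=> m hm Pm; apply: N2; exists m.
have [i [hi Hi]] : exists i, (i < k)%N /\ forall n, exists m, (n <= m)%N /\ P i m.
  apply: IH => n; have [m [hm [i [hi Pi]]]] := H (maxn n n0).
  exists m; split; first by apply: leq_trans (leq_maxl _ _) hm.
  exists i; split => //.
  rewrite ltnS leq_eqVlt in hi; case/orP: hi => [/eqP ei|//].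
  by subst i; exfalso; apply: (Hn0 m) => //; apply: leq_trans (leq_maxr _ _) hm.
by exists i; split => //; apply: leqW.
Qed.

Lemma part1 : katetov_le Spl trE.
Proof.
exists (fun s => s) => X [k [As [hinf hcov]]].
exists (fun n => CA (if (n < k)%N then As n else (fun _ => True))); split.
  move=> n; split; first exact: closed_CA.
  apply: null_CA; case: ifP => hn; first exact: hinf.
  by move=> n'; exists n'.
move=> x Hx.
have [i [hi Hi]] : exists i, (i < k)%N /\ forall n, exists m, (n <= m)%N /\ S_of (As i) (Defs.prefix x m).
  apply: pigeon => n; have [m [hm hX]] := Hx n.
  by exists m; split => //; apply: hcov.
exists i; rewrite hi => a a' Aa Aa'.
have [m [hm hS]] := Hi (maxn a a').+1.
have ha : (a < m)%N by apply: leq_trans hm; rewrite ltnS leq_maxl.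
have ha' : (a' < m)%N by apply: leq_trans hm; rewrite ltnS leq_maxr.
have := hS a a' Aa Aa'.
by rewrite /Defs.prefix size_mkseq !nth_mkseq //; apply.
Qed.

Local Close Scope ring_scope.

Theorem mainTheorem6 : katetov_le Spl trE /\ katetov_le Spl FinFin.
Proof. split; [exact: part1 | exact: part2]. Qed.
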